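(* Let $P,Q$ be distributions over pairs $x=(x_1,x_2)$ with $x_1\in\{1,\dots,r_1\}$ and $x_2\in\{1,\dots,r_2\}$, and assume $P(x_i=t)>0$ for all $i\in\{1,2\}$, $t\in\{1,\dots,r_i\}$. Let $\mathcal{F}=\{f_1(x_1)+f_2(x_2)\}$ where $f_i:\{1,\dots,r_i\}\to\mathbb{R}$ are arbitrary functions. Then $$\tau(P,Q,\mathcal{F})\le \frac{2}{\lambda_2(\bar K_P)}\max_{i\in\{1,2\},\,t\in\{1,\dots,r_i\}}\frac{Q(x_i=t)}{P(x_i=t)}$$ (interpreted as $+\infty$ if $\lambda_2(\bar K_P)=0$).
   Context: $\tau(P,Q,\mathcal{F})=\sup_{f,g\in\mathcal{F}}\mathbb{E}_Q[(f(x)-g(x))^2]/\mathbb{E}_P[(f(x)-g(x))^2]$ with the convention $0/0=0$. Identify $P$ with the $r_1\times r_2$ matrix $[P]_{a,b}=P(x_1=a,x_2=b)$; let $D_1=\mathrm{diag}(P(x_1=1),\dots,P(x_1=r_1))$ and $D_2=\mathrm{diag}(P(x_2=1),\dots,P(x_2=r_2))$ (row and column sums of $P$). The signless Laplacian of $P$ is the $(r_1+r_2)\times(r_1+r_2)$ matrix $$K_P=\begin{pmatrix}D_1 & P\\ P^\top & D_2\end{pmatrix},$$ and the normalized signless Laplacian is $\bar K_P=\mathrm{diag}(K_P)^{-1/2}K_P\,\mathrm{diag}(K_P)^{-1/2}$, where $\mathrm{diag}(K_P)$ is $K_P$ with all off-diagonal entries set to zero. For a symmetric matrix $M$, $\lambda_1(M)\le\lambda_2(M)\le\cdots$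 are its eigenvalues in ascending order. *)

(* Defs.v *)
From HB Require Import structures.
From mathcomp Require Import all_boot all_order all_algebra.
From mathcomp Require Import all_classical all_reals.
From mathcomp Require Import ereal.
Set Implicit Arguments. Unset Strict Implicit. Unset Printing Implicit Defensive.
Import Order.TTheory GRing.Theory Num.Theory.
Local Open Scope ring_scope.

Section Defs.
Variables (R : realType) (r1 r2 : nat).

(* a distribution on {1..r1} x {1..r2} (0-indexed as 'I_r1 * 'I_r2) *)
Definition is_distr (P : {ffun 'I_r1 * 'I_r2 -> R}) : Prop :=
  (forall x, 0 <= P x) /\ \sum_x P x = 1.

Definition marg1 (P : {ffun 'I_r1 * 'I_r2 -> R}) (a : 'I_r1) : R :=
  \sum_(b < r2) P (a, b).
Definition marg2 (P : {ffun 'I_r1 * 'I_r2 -> R}) (b : 'I_r2) : R :=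
  \sum_(a < r1) P (a, b).

Definition expect (P : {ffun 'I_r1 * 'I_r2 -> R}) (h : 'I_r1 * 'I_r2 -> R) : R :=
  \sum_x P x * h x.

Definition addfun (f1 : 'I_r1 -> R) (f2 : 'I_r2 -> R) (x : 'I_r1 * 'I_r2) : R :=
  f1 x.1 + f2 x.2.

(* ratio E_Q[(f-g)^2] / E_P[(f-g)^2] in extended reals, with 0/0 = 0 and c/0 = +oo *)
Definition eratio (num den : R) : \bar R :=
  if den == 0 then (if num == 0 then 0%E else +oo%E) else (num / den)%:E.

Definition tau (P Q : {ffun 'I_r1 * 'I_r2 -> R}) : \bar R :=
  ereal_sup [set r | exists (f1 g1 : 'I_r1 -> R) (f2 g2 : 'I_r2 -> R),
      r = eratio
        (expect Q (fun x => (addfun f1 f2 x - addfun g1 g2 x) ^+ 2))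
        (expect P (fun x => (addfun f1 f2 x - addfun g1 g2 x) ^+ 2))]%classic.

Definition Pmx (P : {ffun 'I_r1 * 'I_r2 -> R}) : 'M[R]_(r1, r2) :=
  \matrix_(a, b) P (a, b).

Definition signlessLap (P : {ffun 'I_r1 * 'I_r2 -> R}) : 'M[R]_(r1 + r2) :=
  block_mx (diag_mx (\row_a marg1 P a)) (Pmx P)
           (Pmx P)^T (diag_mx (\row_b marg2 P b)).

Definition normSignlessLap (P : {ffun 'I_r1 * 'I_r2 -> R}) : 'M[R]_(r1 + r2) :=
  let K := signlessLap P in
  let Dm := diag_mx (\row_i (Num.sqrt (K i i))^-1) in
  Dm *m K *m Dm.

End Defs.

Definition eigenvalues_asc (R : realType) (n : nat) (M : 'M[R]_n) (s : seq R) : Prop :=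
  sorted <=%R s /\ char_poly M = \prod_(a <- s) ('X - a%:P).

(* Main.v *)
Require Import Defs.
From HB Require Import structures.
From mathcomp Require Import all_boot all_order all_algebra.
From mathcomp Require Import all_classical all_reals.
From mathcomp Require Import ereal.
From mathcomp Require Import spectral sesquilinear.
From mathcomp.real_closed Require Import complex.
From mathcomp.algebra_tactics Require Import ring.
Set Implicit Arguments. Unset Strict Implicit. Unset Printing Implicit Defensive.
Import Order.TTheory GRing.Theory Num.Theory.
Local Open Scope ring_scope.

Section Spectral_part.
Local Open Scope sesquilinear_scope.

Lemma tcM (C : numClosedFieldType) m n p (A : 'M[C]_(m, n)) (B : 'M[C]_(n, p)) :
  (A *m B)^t* = B^t* *m A^t*.
Proof. by rewrite trmx_mul map_mxM. Qed.

Lemma spec_core (C : numClosedFieldType) n (A : 'M[C]_n) (lam : C) (u v : 'rV[C]_n) :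
  A \is hermsymmx -> lam \is Num.real -> 0 < lam ->
  (forall i j : 'I_n, i != j -> spectral_diag A 0 i < lam -> spectral_diag A 0 j < lam -> False) ->
  u *m A = 0 -> u != 0 -> v *m u^t* = 0 ->
  lam * (v *m v^t*) 0 0 <= (v *m A *m v^t*) 0 0.
Proof.
move=> HA lamR lam0 Hcnt uA u0 vu.
set P := spectralmx A; set d := spectral_diag A.
have PU : P \is unitarymx := spectral_unitarymx A.
have PPt : P *m P^t* = 1%:M by apply/unitarymxP.
have PtP : P^t* *m P = 1%:M.
  by rewrite -invmx_unitary // mulVmx // unitarymx_unit.
have dreal : d \is a realmx := hermitian_spectral_diag_real HA.
have AE : A = P^t* *m diag_mx d *m P.
  rewrite -invmx_unitary //; apply/orthomx_spectralP/hermitian_normalmx/HA.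
set w := v *m P^t*; set z := u *m P^t*.
have zd : z *m diag_mx d = 0.
  have h : u *m A *m P^t* = z *m diag_mx d *m (P *m P^t*).
    by rewrite AE /z !mulmxA.
  by rewrite PPt mulmx1 uA !mul0mx in h.
have zi i : z 0 i * d 0 i = 0.
  by move/matrixP: zd => /(_ 0 i); rewrite mul_mx_diag !mxE.
have wz : w *m z^t* = 0.
  by rewrite /w /z tcM trmxCK mulmxA -(mulmxA v) PtP mulmx1 vu.
have uz : u = z *m P by rewrite /z -mulmxA PtP mulmx1.
have E1 : v *m A *m v^t* = w *m diag_mx d *m w^t*.
  by rewrite AE /w tcM trmxCK !mulmxA.
have E2 : v *m v^t* = w *m w^t*.
  by rewrite /w tcM trmxCK mulmxA -(mulmxA v) PtP mulmx1.
clearbody w z.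
have dR i : d 0 i \is Num.real by apply: (mxOverP dreal).
have key i : lam * (w 0 i * (w 0 i)^*) <= d 0 i * (w 0 i * (w 0 i)^*).
  have [ld|dl] := real_leP lamR (dR i).
    by rewrite ler_wpM2r // mul_conjC_ge0.
  suff -> : w 0 i = 0 by rewrite mul0r !mulr0.
  have zk k : k != i -> z 0 k = 0.
    move=> ki; have := zi k; move/eqP; rewrite mulf_eq0 => /orP[/eqP //|/eqP dk0].
    exfalso; apply: (Hcnt k i ki _ dl); by rewrite dk0.
  have zi0 : z 0 i != 0.
    apply: contraNneq u0 => zi0; rewrite uz.
    suff -> : z = 0 by rewrite mul0mx.
    apply/rowP => k; rewrite [RHS]mxE; have [->|ki] := eqVneq k i; [exact: zi0|exact: zk].
  move/matrixP: wz => /(_ 0 0); rewrite !mxE (bigD1 i) //= big1 ?addr0.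
    by rewrite !mxE => /eqP; rewrite mulf_eq0 conjC_eq0 (negPf zi0) orbF => /eqP.
  by move=> k ki; rewrite !mxE zk ?conjC0 ?mulr0.
rewrite E1 E2 mul_mx_diag !mxE mulr_sumr; apply: ler_sum => i _; rewrite !mxE.
by rewrite mulrAC [X in _ <= X]mulrC; exact: key.
Qed.
Lemma sim_char (F : comNzRingType) n (A Q Qi : 'M[F]_n) :
  Qi *m Q = 1%:M -> char_poly (Qi *m A *m Q) = char_poly A.
Proof.
move=> QQ; rewrite /char_poly /char_poly_mx.
have E : 'X%:M - map_mx (@polyC F) (Qi *m A *m Q) =
    map_mx (@polyC F) Qi *m ('X%:M - map_mx (@polyC F) A) *m map_mx (@polyC F) Q.
  rewrite mulmxBr mulmxBl !map_mxM mul_mx_scalar -scalemxAl.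
  have -> : map_mx (@polyC F) Qi *m map_mx (@polyC F) Q = 1%:M.
    by rewrite -map_mxM QQ map_mx1.
  by rewrite scalemx1.
have QQ' : map_mx (@polyC F) Qi *m map_mx (@polyC F) Q = 1%:M.
  by rewrite -map_mxM QQ map_mx1.
by rewrite E !det_mulmx mulrAC -det_mulmx QQ' det1 mul1r.
Qed.

Lemma char_spec (C : numClosedFieldType) n (A : 'M[C]_n) : A \is hermsymmx ->
  char_poly A = \prod_(i < n) ('X - (spectral_diag A 0 i)%:P).
Proof.
move=> HA; set P := spectralmx A; set d := spectral_diag A.
have PU : P \is unitarymx := spectral_unitarymx A.
have PtP : P^t* *m P = 1%:M.
  by rewrite -invmx_unitary // mulVmx // unitarymx_unit.
have AE : A = P^t* *m diag_mx d *m P.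
  rewrite -invmx_unitary //; apply/orthomx_spectralP/hermitian_normalmx/HA.
rewrite AE sim_char // char_poly_trig ?diag_mx_is_trig //.
by apply: eq_bigr => i _; rewrite mxE eqxx mulr1n.
Qed.
Lemma count_lt_s1 (R : realDomainType) (s : seq R) :
  sorted <=%R s -> (count (fun x : R => (x < s`_1)%R) s <= 1)%N.
Proof.
case: s => [//|a [|b t]]; first by rewrite /=; case: (_ < _).
move=> /= /andP[ab pt].
have H := order_path_min le_trans pt.
have ct : count (fun x => x < b) t = 0%N.
  apply/eqP; rewrite -leqn0 leqNgt -has_count; apply/hasPn => x /(allP H) bx.
  by rewrite ltNge bx.
by rewrite ct ltxx; case: (a < b).
Qed.

Lemma perm_spec (R : rcfType) n (A : 'M[R]_n) (s : seq R) (d : 'rV[R[i]]_n):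
  char_poly (map_mx (real_complex R) A) = \prod_(i < n) ('X - (d 0 i)%:P) ->
  char_poly A = \prod_(a <- s) ('X - a%:P) ->
  perm_eq [seq d 0 k | k <- enum 'I_n] (map (real_complex R) s).
Proof.
move=> e0 cA; apply: prod_XsubC_eq.
have e1 : char_poly (map_mx (real_complex R) A) = \prod_(x <- map (real_complex R) s) ('X - x%:P).
  rewrite -map_char_poly cA rmorph_prod big_map; apply: eq_bigr => a _.
  exact: map_polyXsubC.
rewrite -e1 e0 big_map big_enum /=.
by apply: eq_bigl => k; rewrite inE.
Qed.

Lemma spec_bound (R : rcfType) n (A : 'M[R]_n) (s : seq R) (u v : 'rV[R]_n) :
  A^T = A -> sorted <=%R s -> char_poly A = \prod_(a <- s) ('X - a%:P) ->
  0 < s`_1 -> u *m A = 0 -> u != 0 -> v *m u^T = 0 ->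
  s`_1 * (v *m v^T) 0 0 <= (v *m A *m v^T) 0 0.
Proof.
move=> AT ss cA s1 uA u0 vu.
have fR x : real_complex R x \is Num.real by apply/complex_realP; exists x.
have tcf m p (B : 'M[R]_(m,p)) :
    (map_mx (real_complex R) B)^t* = map_mx (real_complex R) B^T.
  by apply/matrixP => i j; rewrite !mxE conj_Creal.
set Ac := map_mx (real_complex R) A.
have HA : Ac \is hermsymmx.
  apply/is_hermitianmxP; rewrite expr0 scale1r; apply/matrixP => i j.
  by rewrite !mxE conj_Creal // -{1}AT mxE.
have lam0 : 0 < real_complex R s`_1.
  by rewrite -(rmorph0 (real_complex R)) ltcR.
have Hcnt (i j : 'I_n) : i != j -> spectral_diag Ac 0 i < real_complex R s`_1 ->
    spectral_diag Ac 0 j < real_complex R s`_1 -> False.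
  move=> ij di dj.
  have pe := perm_spec (char_spec HA) cA.
  have c1 := count_lt_s1 ss.
  move/permP: pe => /(_ (fun x => x < real_complex R s`_1)).
  have ec : count (preim (real_complex R) (fun x => x < real_complex R s`_1)) s
      = count (fun x => x < s`_1) s by apply: eq_count => x /=; rewrite ltcR.
  rewrite [in RHS]count_map ec count_map (permP (perm_to_rem (mem_enum _ i))) /= di.
  move=> e; move: c1; rewrite -e add1n ltnS leqn0 -[_ == 0%N]negbK -lt0n -has_count.
  move=> /hasPn H; suff : ~~ (spectral_diag Ac 0 j < real_complex R s`_1) by rewrite dj.
  apply: H.
  by rewrite mem_rem_uniq ?enum_uniq // inE eq_sym ij mem_enum.
have uA' : map_mx (real_complex R) u *m Ac = 0.
  by rewrite -map_mxM uA map_mx0.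
have u0' : map_mx (real_complex R) u != 0 by rewrite map_mx_eq0.
have vu' : map_mx (real_complex R) v *m (map_mx (real_complex R) u)^t* = 0.
  by rewrite tcf -map_mxM vu map_mx0.
have := spec_core HA (fR _) lam0 Hcnt uA' u0' vu'.
by rewrite !tcf -!map_mxM !mxE -rmorphM lecR.
Qed.

End Spectral_part.

Lemma fin_ratio (R : realType) (lam M E Nq Den : R) : 0 < lam -> 0 <= M -> 0 <= E ->
  0 <= Nq -> Nq <= 2 * M * E -> lam * E <= Den ->
  (eratio Nq Den <= (2 / lam * M)%:E)%E.
Proof.
move=> l0 M0 E0 N0 NE ED.
have B0 : 0 <= 2 / lam * M by rewrite mulr_ge0 // divr_ge0 // ltW.
rewrite /eratio; case: eqP => [D0|/eqP D0].
  have E0' : E = 0.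
    apply/eqP; rewrite eq_le E0 andbT.
    by rewrite -(pmulr_rle0 _ l0) -D0.
  have -> : Nq = 0 by apply/eqP; rewrite eq_le N0 andbT; move: NE; rewrite E0' mulr0.
  by rewrite eqxx lee_fin.
have Dp : 0 < Den by rewrite lt_neqAle eq_sym D0 (le_trans _ ED) // mulr_ge0 // ltW.
rewrite lee_fin ler_pdivrMr //.
apply: (le_trans NE).
have -> : 2 * M * E = 2 / lam * M * (lam * E).
  by field; rewrite gt_eqF.
by rewrite ler_wpM2l.
Qed.

Lemma sum_marg1 (R : realType) r1 r2 (P : {ffun 'I_r1 * 'I_r2 -> R}) (g : 'I_r1 -> R) :
  \sum_x P x * g x.1 = \sum_a marg1 P a * g a.
Proof.
transitivity (\sum_x P (x.1, x.2) * g x.1); first by apply: eq_bigr => -[a b].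
rewrite -(pair_bigA _ (fun a b => P (a, b) * g a)) /=.
by apply: eq_bigr => a _; rewrite /marg1 mulr_suml.
Qed.

Lemma sum_marg2 (R : realType) r1 r2 (P : {ffun 'I_r1 * 'I_r2 -> R}) (g : 'I_r2 -> R) :
  \sum_x P x * g x.2 = \sum_b marg2 P b * g b.
Proof.
transitivity (\sum_x P (x.1, x.2) * g x.2); first by apply: eq_bigr => -[a b].
rewrite -(pair_bigA _ (fun a b => P (a, b) * g b)) /= exchange_big /=.
by apply: eq_bigr => b _; rewrite /marg2 mulr_suml.
Qed.

Lemma sum_pair (R : realType) r1 r2 (P : {ffun 'I_r1 * 'I_r2 -> R}) (g : 'I_r1 -> 'I_r2 -> R) :
  \sum_x P x * g x.1 x.2 = \sum_a \sum_b P (a, b) * g a b.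
Proof.
transitivity (\sum_x P (x.1, x.2) * g x.1 x.2); first by apply: eq_bigr => -[a b].
by rewrite -(pair_bigA _ (fun a b => P (a, b) * g a b)).
Qed.

Lemma rowdot (R : realType) r1 r2 (x1 y1 : 'rV[R]_r1) (x2 y2 : 'rV[R]_r2) :
  (row_mx x1 x2 *m (row_mx y1 y2)^T) 0 0 = \sum_a x1 0 a * y1 0 a + \sum_b x2 0 b * y2 0 b.
Proof.
rewrite tr_row_mx mul_row_col !mxE.
by congr (_ + _); apply: eq_bigr => i _; rewrite mxE.
Qed.

Lemma den_spec (R : realType) r1 r2 (P : {ffun 'I_r1 * 'I_r2 -> R}) (s : seq R)
    (k1 : 'I_r1 -> R) (k2 : 'I_r2 -> R) :
  is_distr P -> (forall a, 0 < marg1 P a) -> (forall b, 0 < marg2 P b) ->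
  eigenvalues_asc (normSignlessLap P) s -> 0 < s`_1 ->
  \sum_a marg1 P a * k1 a - \sum_b marg2 P b * k2 b = 0 ->
  s`_1 * (\sum_a marg1 P a * k1 a ^+ 2 + \sum_b marg2 P b * k2 b ^+ 2)
    <= \sum_x P x * (k1 x.1 + k2 x.2) ^+ 2.
Proof.
move=> HP hm1 hm2 [ss cA] l0 orth.
have sm1 : \sum_a marg1 P a = 1.
  rewrite /marg1 pair_bigA /= -HP.2; apply: eq_bigr => -[a b] //.
have sm2 : \sum_b marg2 P b = 1.
  rewrite /marg2 exchange_big pair_bigA /= -HP.2; apply: eq_bigr => -[a b] //.
set K := signlessLap P.
set A := normSignlessLap P.
pose dg := \row_i (Num.sqrt (K i i))^-1 : 'rV[R]_(r1 + r2).
have dgl a : dg 0 (lshift r2 a) = (Num.sqrt (marg1 P a))^-1.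
  by rewrite mxE /K /signlessLap block_mxEul !mxE eqxx mulr1n.
have dgr b : dg 0 (rshift r1 b) = (Num.sqrt (marg2 P b))^-1.
  by rewrite mxE /K /signlessLap block_mxEdr !mxE eqxx mulr1n.
have AE : A = diag_mx dg *m K *m diag_mx dg by [].
have sqK (x y : R) : 0 < x -> Num.sqrt x * y * (Num.sqrt x)^-1 = y.
  by move=> x0; rewrite mulrAC mulfV ?mul1r // gt_eqF // sqrtr_gt0.
pose w := row_mx (\row_a k1 a) (\row_b k2 b) : 'rV[R]_(r1 + r2).
pose v := row_mx (\row_a (Num.sqrt (marg1 P a) * k1 a))
                 (\row_b (Num.sqrt (marg2 P b) * k2 b)) : 'rV[R]_(r1 + r2).
pose u := row_mx (\row_a Num.sqrt (marg1 P a))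
                 (\row_b (- Num.sqrt (marg2 P b))) : 'rV[R]_(r1 + r2).
pose o := row_mx (\row_a (1 : R)) (\row_b (-1 : R)) : 'rV[R]_(r1 + r2).
have vD : v *m diag_mx dg = w.
  apply/rowP => i; rewrite mul_mx_diag mxE; have [a ->|a ->] := split_ordP i.
    by rewrite dgl !row_mxEl !mxE sqK.
  by rewrite dgr !row_mxEr !mxE sqK.
have uD : u *m diag_mx dg = o.
  apply/rowP => i; rewrite mul_mx_diag mxE; have [a ->|a ->] := split_ordP i.
    by rewrite dgl !row_mxEl !mxE mulfV // gt_eqF // sqrtr_gt0.
  by rewrite dgr !row_mxEr !mxE mulNr mulfV // gt_eqF // sqrtr_gt0.
have Dv : diag_mx dg *m v^T = w^T by rewrite -[diag_mx dg]tr_diag_mx -trmx_mul vD.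
have KT : K^T = K.
  by rewrite /K /signlessLap tr_block_mx trmxK !tr_diag_mx.
have AT : A^T = A by rewrite AE !trmx_mul !tr_diag_mx KT mulmxA.
have oK : o *m K = 0.
  rewrite /o /K /signlessLap mul_row_block; apply/rowP => i.
  have [a ->|a ->] := split_ordP i.
    rewrite row_mxEl mul_mx_diag !mxE mul1r.
    under eq_bigr do rewrite !mxE mulN1r.
    by rewrite sumrN /marg1; apply/eqP; rewrite subr_eq0; apply/eqP/eq_bigr.
  rewrite row_mxEr mul_mx_diag !mxE mulN1r.
  under eq_bigr do rewrite !mxE mul1r.
  by rewrite /marg2; apply/eqP; rewrite subr_eq0; apply/eqP/eq_bigr.
have uA : u *m A = 0 by rewrite AE !mulmxA uD oK !mul0mx.
have ss1 a : Num.sqrt (marg1 P a) * Num.sqrt (marg1 P a) = marg1 P a.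
  by rewrite -expr2 sqr_sqrtr // ltW.
have ss2 b : Num.sqrt (marg2 P b) * Num.sqrt (marg2 P b) = marg2 P b.
  by rewrite -expr2 sqr_sqrtr // ltW.
have u0 : u != 0.
  apply/eqP => u0; have : (u *m u^T) 0 0 = 2.
    rewrite rowdot.
    under eq_bigr do rewrite !mxE ss1.
    under [X in _ + X]eq_bigr do rewrite !mxE mulrNN ss2.
    by rewrite sm1 sm2.
  by rewrite u0 mul0mx mxE => /eqP; rewrite eq_sym pnatr_eq0.
have vu : v *m u^T = 0.
  apply/rowP => i; rewrite ord1 rowdot [RHS]mxE.
  under eq_bigr do rewrite !mxE mulrAC ss1.
  under [X in _ + X]eq_bigr do rewrite !mxE mulrN mulrAC ss2.
  by rewrite sumrN; exact: orth.
have vv : (v *m v^T) 0 0 = \sum_a marg1 P a * k1 a ^+ 2 + \sum_b marg2 P b * k2 b ^+ 2.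
  rewrite rowdot.
  under eq_bigr do rewrite !mxE mulrACA ss1 -expr2.
  by under [X in _ + X]eq_bigr do rewrite !mxE mulrACA ss2 -expr2.
have quad : (v *m A *m v^T) 0 0 = \sum_x P x * (k1 x.1 + k2 x.2) ^+ 2.
  rewrite AE !mulmxA vD -mulmxA Dv /K /signlessLap /w mul_row_block rowdot.
  have e1 : \row_a k1 a *m diag_mx (\row_a marg1 P a) + \row_b k2 b *m (Pmx P)^T
      = \row_a (\sum_b (k1 a * P (a, b) + k2 b * P (a, b))).
    apply/rowP => a; rewrite mul_mx_diag !mxE /marg1 mulr_sumr -big_split /=.
    by apply: eq_bigr => b _; rewrite !mxE.
  have e2 : \row_a k1 a *m Pmx P + \row_b k2 b *m diag_mx (\row_b marg2 P b)
      = \row_b (\sum_a (k1 a * P (a, b) + k2 b * P (a, b))).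
    apply/rowP => b; rewrite mul_mx_diag !mxE /marg2 mulr_sumr -big_split /=.
    by apply: eq_bigr => a _; rewrite !mxE.
  rewrite e1 e2.
  under eq_bigr do rewrite !mxE mulr_suml.
  under [X in _ + X]eq_bigr do rewrite !mxE mulr_suml.
  rewrite [X in _ + X]exchange_big -big_split /= (sum_pair P (fun a b => (k1 a + k2 b) ^+ 2)).
  apply: eq_bigr => a _; rewrite -big_split /=; apply: eq_bigr => b _.
  ring.
have := spec_bound AT ss cA l0 uA u0 vu.
by rewrite vv quad.
Qed.

Theorem mainTheorem2 (R : realType) (r1 r2 : nat)
    (P Q : {ffun 'I_r1 * 'I_r2 -> R}) (s : seq R) :
  is_distr P -> is_distr Q ->
  (forall a : 'I_r1, 0 < marg1 P a) ->
  (forall b : 'I_r2, 0 < marg2 P b) ->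
  eigenvalues_asc (normSignlessLap P) s ->
  let lambda2 := s`_1 in
  let M := Num.max (\big[Num.max/0]_(a < r1) (marg1 Q a / marg1 P a))
                   (\big[Num.max/0]_(b < r2) (marg2 Q b / marg2 P b)) in
  (tau P Q <= (if (0 < lambda2)%R then (2 / lambda2 * M)%:E else +oo))%E.
Proof.
move=> HP HQ hm1 hm2 eig; cbv zeta.
set M := Num.max _ _.
case: ifPn => [l0|_]; last by rewrite leey.
have M0 : 0 <= M by rewrite /M le_max bigmax_ge_id.
have MQ1 a : marg1 Q a <= M * marg1 P a.
  rewrite -ler_pdivrMr //; apply: le_trans (le_bigmax 0 (fun a => marg1 Q a / marg1 P a) a) _.
  by rewrite /M le_max lexx.
have MQ2 b : marg2 Q b <= M * marg2 P b.
  rewrite -ler_pdivrMr //; apply: le_trans (le_bigmax 0 (fun b => marg2 Q b / marg2 P b) b) _.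
  by rewrite /M le_max lexx orbT.
have sm1 : \sum_a marg1 P a = 1.
  rewrite /marg1 pair_bigA /= -HP.2; apply: eq_bigr => -[a b] //.
have sm2 : \sum_b marg2 P b = 1.
  rewrite /marg2 exchange_big pair_bigA /= -HP.2; apply: eq_bigr => -[a b] //.
apply: ge_ereal_sup => _ [f1 [g1 [f2 [g2 ->]]]].
pose c := (\sum_b marg2 P b * (f2 b - g2 b) - \sum_a marg1 P a * (f1 a - g1 a)) / 2.
pose k1 a := f1 a - g1 a + c.
pose k2 b := f2 b - g2 b - c.
have Ef x : addfun f1 f2 x - addfun g1 g2 x = k1 x.1 + k2 x.2.
  by rewrite /addfun /k1 /k2; ring.
have -> : expect Q (fun x => (addfun f1 f2 x - addfun g1 g2 x) ^+ 2)
    = \sum_x Q x * (k1 x.1 + k2 x.2) ^+ 2.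
  by apply: eq_bigr => x _; rewrite Ef.
have -> : expect P (fun x => (addfun f1 f2 x - addfun g1 g2 x) ^+ 2)
    = \sum_x P x * (k1 x.1 + k2 x.2) ^+ 2.
  by apply: eq_bigr => x _; rewrite Ef.
have orth : \sum_a marg1 P a * k1 a - \sum_b marg2 P b * k2 b = 0.
  rewrite /k1 /k2.
  under eq_bigr do rewrite mulrDr.
  under [X in _ - X]eq_bigr do rewrite mulrBr.
  rewrite big_split sumrB /= -!mulr_suml sm1 sm2 /c; field; done.
pose E := \sum_a marg1 P a * k1 a ^+ 2 + \sum_b marg2 P b * k2 b ^+ 2.
have E0 : 0 <= E.
  by rewrite addr_ge0 // sumr_ge0 // => i _; rewrite mulr_ge0 ?sqr_ge0 // ltW.
have ED := den_spec HP hm1 hm2 eig l0 orth.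
apply: (fin_ratio l0 M0 E0 _ _ ED).
  by rewrite sumr_ge0 // => x _; rewrite mulr_ge0 ?sqr_ge0 // HQ.1.
apply: (le_trans (y := \sum_x Q x * (2 * k1 x.1 ^+ 2 + 2 * k2 x.2 ^+ 2))).
  apply: ler_sum => x _; rewrite ler_wpM2l ?HQ.1 //.
  rewrite -subr_ge0.
  have -> : 2 * k1 x.1 ^+ 2 + 2 * k2 x.2 ^+ 2 - (k1 x.1 + k2 x.2) ^+ 2
    = (k1 x.1 - k2 x.2) ^+ 2 by ring.
  exact: sqr_ge0.
under eq_bigr do rewrite mulrDr.
rewrite big_split /= (sum_marg1 Q (fun a => 2 * k1 a ^+ 2))
  (sum_marg2 Q (fun b => 2 * k2 b ^+ 2)) /E mulrDr !mulr_sumr.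
apply: lerD; apply: ler_sum => i _.
  rewrite -subr_ge0.
  have -> : 2 * M * (marg1 P i * k1 i ^+ 2) - marg1 Q i * (2 * k1 i ^+ 2)
    = (2 * k1 i ^+ 2) * (M * marg1 P i - marg1 Q i) by ring.
  by rewrite mulr_ge0 ?subr_ge0 ?MQ1 // mulr_ge0 // sqr_ge0.
rewrite -subr_ge0.
have -> : 2 * M * (marg2 P i * k2 i ^+ 2) - marg2 Q i * (2 * k2 i ^+ 2)
  = (2 * k2 i ^+ 2) * (M * marg2 P i - marg2 Q i) by ring.
by rewrite mulr_ge0 ?subr_ge0 ?MQ2 // mulr_ge0 // sqr_ge0.
Qed.
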